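(* Let $K$ be a simplicial complex in $\mathbb{R}^N$ and let $U\subset\mathbb{R}^N$ be a convex subset. Then the subcomplex $K\cap U$ is nice.
   Context: A simplicial complex is a locally finite set of linear simplices in $\mathbb{R}^N$ closed under faces with pairwise intersections common faces. $K\cap U$ is the maximal subcomplex of $K$ whose simplices are all contained in $U$. For a subcomplex $K'$ and $\Delta\in K$, $\Delta\cap K'$ denotes the set of simplices of $K'$ that are faces of $\Delta$. Two simplices are adjacent if they share a face; $\operatorname{star}(K')$ is the set of simplices adjacent to some simplex of $K'$ with their faces. $K'$ is nice if for every $\Delta\in\operatorname{star}(K')$, $\Delta\cap K'$ is a single face of $\Delta$ (together with its faces). *)

(* Defs.v *)
From HB Require Import structures.
From mathcomp Require Import all_boot all_order all_algebra.
From mathcomp Require Import finmap.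
From mathcomp Require Import all_classical all_reals all_analysis.
Set Implicit Arguments. Unset Strict Implicit. Unset Printing Implicit Defensive.
Import Order.TTheory GRing.Theory Num.Theory.
Import numFieldNormedType.Exports.
Local Open Scope classical_set_scope.
Local Open Scope ring_scope.

(* Points of R^N are row vectors 'rV[R]_N.  A (linear) simplex is represented
   by its finite, nonempty, affinely independent set of vertices. *)
Section Simplicial.
Variables (R : realType) (N : nat).
Notation pt := 'rV[R]_N.
Notation simplex := {fset pt}.

Definition affinely_independent (S : simplex) : Prop :=
  forall c : pt -> R,
    \sum_(v <- S) c v = 0 -> \sum_(v <- S) c v *: v = 0 ->
    forall v, v \in S -> c v = 0.

Definition is_simplex (S : simplex) : Prop :=
  S != fset0 /\ affinely_independent S.

Definition conv (S : simplex) : set pt :=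
  [set x | exists c : pt -> R,
     (forall v, v \in S -> 0 <= c v) /\ \sum_(v <- S) c v = 1 /\
     x = \sum_(v <- S) c v *: v].

Definition face (F D : simplex) : Prop := F != fset0 /\ fsubset F D.

Definition closed_under_faces (K : set simplex) : Prop :=
  forall D F, K D -> face F D -> K F.

Definition locally_finite (K : set simplex) : Prop :=
  forall x : pt, exists V : set pt, nbhs x V /\
    finite_set [set D | K D /\ conv D `&` V !=set0].

Definition simplicial_complex (K : set simplex) : Prop :=
  [/\ forall D, K D -> is_simplex D,
      closed_under_faces K,
      (forall D E, K D -> K E ->
         conv D `&` conv E = set0 \/
         exists F, face F D /\ face F E /\ conv D `&` conv E = conv F)
    & locally_finite K].

Definition convex (U : set pt) : Prop :=
  forall x y (t : R), U x -> U y -> 0 <= t -> t <= 1 ->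
    U ((1 - t) *: x + t *: y).

(* K ∩ U : the maximal subcomplex of K whose simplices lie in U, i.e. the
   set of all simplices of K contained in U (this set is closed under faces) *)
Definition complex_cap (K : set simplex) (U : set pt) : set simplex :=
  [set D | K D /\ conv D `<=` U].

Definition simplex_cap (D : simplex) (K' : set simplex) : set simplex :=
  [set G | K' G /\ face G D].

Definition adjacent (K : set simplex) (D E : simplex) : Prop :=
  exists F, K F /\ face F D /\ face F E.

Definition star (K K' : set simplex) : set simplex :=
  [set D | exists D', K D' /\ face D D' /\
             exists E, K' E /\ adjacent K D' E].

(* K' is nice: for every Δ ∈ star(K'), Δ ∩ K' consists of a single face F
   of Δ together with its faces (F = ∅ allowed, giving Δ ∩ K' = ∅). *)
Definition nice (K K' : set simplex) : Prop :=
  forall D, star K K' D ->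
    exists F : simplex, fsubset F D /\
      simplex_cap D K' = [set G | face G F].

End Simplicial.

(* Main.v *)
Require Import Defs.
From HB Require Import structures.
From mathcomp Require Import all_boot all_order all_algebra.
From mathcomp Require Import finmap.
From mathcomp Require Import all_classical all_reals all_analysis.
Set Implicit Arguments. Unset Strict Implicit. Unset Printing Implicit Defensive.
Import Order.TTheory GRing.Theory Num.Theory.
Local Open Scope classical_set_scope.
Local Open Scope ring_scope.

Lemma sum0_vec (R : realType) (N : nat) (s : seq 'rV[R]_N) (c : 'rV[R]_N -> R) :
  (forall v, v \in s -> 0 <= c v) -> \sum_(v <- s) c v = 0 ->
  \sum_(v <- s) c v *: v = 0.
Proof.
elim: s => [|v s IH] Hc; first by rewrite !big_nil.
rewrite !big_cons => /eqP.
have h0 : 0 <= c v by apply: Hc; rewrite inE eqxx.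
have h1 : 0 <= \sum_(w <- s) c w.
  by rewrite big_seq; apply: sumr_ge0 => w ws; apply: Hc; rewrite inE ws orbT.
rewrite (paddr_eq0 h0 h1).
move=> /andP[/eqP e1 /eqP e2]; rewrite e1 scale0r add0r IH //.
by move=> w ws; apply: Hc; rewrite inE ws orbT.
Qed.

Lemma conv_in (R : realType) (N : nat) (U : set 'rV[R]_N) : convex U ->
  forall (s : seq 'rV[R]_N) (c : 'rV[R]_N -> R),
  (forall v, v \in s -> U v) ->
  (forall v, v \in s -> 0 <= c v) -> \sum_(v <- s) c v = 1 ->
  U (\sum_(v <- s) c v *: v).
Proof.
move=> cU; elim=> [|v s IH] c HU Hc; first by rewrite big_nil => /eqP; rewrite eq_sym oner_eq0.
rewrite !big_cons.
have Hc' : forall w, w \in s -> 0 <= c w by move=> w ws; apply: Hc; rewrite inE ws orbT.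
have HU' : forall w, w \in s -> U w by move=> w ws; apply: HU; rewrite inE ws orbT.
set b := \sum_(w <- s) c w => Hsum.
have b0 : 0 <= b by rewrite /b big_seq; apply: sumr_ge0 => w ws; apply: Hc'.
have cv0 : 0 <= c v by apply: Hc; rewrite inE eqxx.
have Uv : U v by apply: HU; rewrite inE eqxx.
have [bz|bnz] := eqVneq b 0.
  rewrite sum0_vec // addr0.
  have -> : c v = 1 by rewrite -Hsum bz addr0.
  by rewrite scale1r.
have bpos : 0 < b by rewrite lt_def bnz b0.
pose c' := fun w => c w / b.
have Hy : U (\sum_(w <- s) c' w *: w).
  apply: IH => //.
    by move=> w ws; rewrite /c' divr_ge0 //; apply: Hc'.
  by rewrite /c' -mulr_suml mulfV.
have -> : \sum_(w <- s) c w *: w = b *: \sum_(w <- s) c' w *: w.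
  rewrite scaler_sumr; apply: eq_bigr => w _.
  by rewrite /c' scalerA mulrCA mulfV // mulr1.
have -> : c v = 1 - b by rewrite -Hsum addrK.
apply: cU => //.
by rewrite -Hsum lerDr.
Qed.

Theorem lemma3p11 (R : realType) (N : nat) (K : set {fset 'rV[R]_N})
  (U : set 'rV[R]_N) :
  simplicial_complex K -> convex U -> nice K (complex_cap K U).
Proof.
move=> [Hs Hf Hi Hl] cU D [D' [KD' [fD _]]].
have KD : K D by apply: Hf fD.
exists [fset v in D | `[< U v >]]%fset; split.
  by apply/fsubsetP => v; rewrite !inE => /andP[].
apply/seteqP; split.
- move=> G [[KG cG] [G0 GD]]; split => //.
  apply/fsubsetP => v vG; rewrite !inE (fsubsetP GD) //=; apply/asboolP.
  apply: cG; exists (fun w => if w == v then 1 else 0); split.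
    by move=> w _; case: eqP.
  split.
    rewrite (big_rem v) //= eqxx big1_seq ?addr0 // => w /andP[_ wr].
    have : w != v.
      by move: wr; rewrite mem_rem_uniq ?fset_uniq // inE => /andP[].
    by move/negbTE => ->.
  rewrite (big_rem v) //= eqxx big1_seq ?addr0 ?scale1r // => w /andP[_ wr].
  have : w != v.
    by move: wr; rewrite mem_rem_uniq ?fset_uniq // inE => /andP[].
  by move/negbTE => ->; rewrite scale0r.
- move=> G [G0 GF]; have GD : fsubset G D.
    by apply: fsubset_trans GF _; apply/fsubsetP => v; rewrite !inE => /andP[].
  split; last by split.
  split; first by apply: Hf KD _; split.
  move=> x [c [c0 [c1 ->]]]; apply: conv_in => //.
  by move=> v vG; move: (fsubsetP GF v vG); rewrite !inE => /andP[_ /asboolP].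
Qed.
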